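(* Let $V$ be a finite-dimensional $S_{n+1}$-invariant subspace of the space of $k$-forms on $T^n$, and let $W_d$ ($0\le d\le n$) be $S_{n+1}$-invariant subspaces with $V_d=W_d\oplus V_{d+1}$. Then the geometric decomposition map $\mathcal D:V\to\bigoplus_{d=0}^n\bigoplus_{\dim F=d}\mathring V(F)$ is $S_{n+1}$-equivariant.
   Context: $T^n\subset\mathbb R^{n+1}$ is the standard simplex $\{\lambda_i\ge0,\ \sum\lambda_i=1\}$. For $\pi\in S_{n+1}$ (permutations of $\{0,\dots,n\}$), $S_\pi(\lambda_0,\dots,\lambda_n)=(\lambda_{\pi(0)},\dots,\lambda_{\pi(n)})$, and $\pi$ acts on forms by pullback $S_\pi^*$. For a face $F$, $V(F)=\mathrm{tr}_{T^n,F}(V)$ (pullback to $F$), and $\mathring V(F)$ is the subspace of $V(F)$ with vanishing trace on $\partial F$. $V_d$ is the subspace of $V$ of forms whose traces vanish on all $(d-1)$-dimensional faces of $T^n$ ($V_0=V$, $V_{n+1}=0$). $\mathcal D$ is defined on $W_d$ by $\alpha\mapsto\bigoplus_{\dim F=d}\mathrm{tr}_{T^n,F}\alpha$ and extended linearly. The action of $S_{n+1}$ on $\bigoplus_{\dim F=d}\mathring V(F)$: if $F'=S_\pi(F)$, then pullback by $S_\pi|_F:F\to F'$ gives a map $S_\pi^*:\mathring V(F')\to\mathring V(F)$, and these maps together define the action of $\pi$ on the direct sum. *)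

(* Defs.v *)
From mathcomp Require Import all_boot all_order all_algebra all_fingroup.
From mathcomp Require Import reals.
Set Implicit Arguments. Unset Strict Implicit. Unset Printing Implicit Defensive.
Import Order.TTheory GRing.Theory Num.Theory.
Local Open Scope ring_scope.

Section Forms.
Variables (R : realType) (n k : nat).

(* Points / vectors of R^{n+1}, coordinates lambda_0..lambda_n. *)
Definition vec := 'I_n.+1 -> R.

(* A genuine k-kform
   on a face F is such a function which is multilinear and alternating on
   the tangent space of F; two raw forms represent the same kform on F iff
   they agree at points of F on tangent vectors of F (see [eqF]). *)
Definition kform := vec -> ('I_k -> vec) -> R.

(* A face of T^n is given by its (nonempty) vertex set F ⊆ {0..n};
   dim F = #|F| - 1. *)
Definition in_face (F : {set 'I_n.+1}) (x : vec) : Prop :=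
  (forall i, 0 <= x i) /\ (\sum_i x i = 1) /\ (forall i, i \notin F -> x i = 0).

Definition tangent (F : {set 'I_n.+1}) (v : vec) : Prop :=
  (\sum_i v i = 0) /\ (forall i, i \notin F -> v i = 0).

Definition fullface : {set 'I_n.+1} := setT.

(* tr_{T^n,F} w = tr_{T^n,F} u : equality of the pullbacks to F. *)
Definition eqF (F : {set 'I_n.+1}) (w u : kform) : Prop :=
  forall x vs, in_face F x -> (forall j, tangent F (vs j)) -> w x vs = u x vs.

Definition eqT (w u : kform) : Prop := eqF fullface w u.

Definition form0 : kform := fun _ _ => 0.
Definition form_add (w u : kform) : kform := fun x vs => w x vs + u x vs.
Definition form_scale (a : R) (w : kform) : kform := fun x vs => a * w x vs.
Definition form_sum (w : 'I_n.+1 -> kform) : kform :=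
  fun x vs => \sum_(d < n.+1) w d x vs.

Definition vlin (a : R) (u w : vec) : vec := fun i => a * u i + w i.
Definition upd (vs : 'I_k -> vec) (j : 'I_k) (u : vec) : 'I_k -> vec :=
  fun i => if i == j then u else vs i.

Definition is_form (w : kform) : Prop :=
  (forall x vs j a u u', in_face fullface x ->
     (forall i, tangent fullface (vs i)) -> tangent fullface u ->
     tangent fullface u' ->
     w x (upd vs j (vlin a u u')) = a * w x (upd vs j u) + w x (upd vs j u'))
  /\ (forall x vs i j, in_face fullface x ->
     (forall l, tangent fullface (vs l)) -> i != j -> vs i = vs j -> w x vs = 0).

(* Subspace of the space of k-forms on T^n (predicate on representatives,
   closed under equality of forms on T^n). *)
Definition kf_subspace (V : kform -> Prop) : Prop :=
  (forall w, V w -> is_form w) /\ V form0 /\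
  (forall a w u, V w -> V u -> V (form_add (form_scale a w) u)) /\
  (forall w u, eqT w u -> V w -> V u).

Definition kf_findim (V : kform -> Prop) : Prop :=
  exists (m : nat) (b : 'I_m -> kform), forall v, V v ->
    exists c : 'I_m -> R, eqT v (fun x vs => \sum_(i < m) c i * b i x vs).

Definition Spi (p : 'S_n.+1) (x : vec) : vec := fun i => x (p i).

Definition pull (p : 'S_n.+1) (w : kform) : kform :=
  fun x vs => w (Spi p x) (fun j => Spi p (vs j)).

Definition Sface (p : 'S_n.+1) (F : {set 'I_n.+1}) : {set 'I_n.+1} :=
  [set i | p i \in F].

Definition Sn_invariant (V : kform -> Prop) : Prop :=
  forall p w, V w -> V (pull p w).

Definition Vsub (V : kform -> Prop) (d : nat) (w : kform) : Prop :=
  V w /\ forall G : {set 'I_n.+1}, #|G| = d -> eqF G w form0.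

Definition dsum_decomp (V : kform -> Prop) (W : nat -> kform -> Prop) (d : nat) : Prop :=
  (forall w, W d w -> Vsub V d w) /\
  (forall w, W d w -> Vsub V d.+1 w -> eqT w form0) /\
  (forall v, Vsub V d v -> exists w u, W d w /\ Vsub V d.+1 u /\
     eqT v (form_add w u)).

Definition is_decomp (W : nat -> kform -> Prop) (v : kform) (w : 'I_n.+1 -> kform) : Prop :=
  (forall d : 'I_n.+1, W d (w d)) /\ eqT v (form_sum w).

Definition fdim (F : {set 'I_n.+1}) : 'I_n.+1 := inord (#|F|.-1).

(* D v, where v = sum_d w_d : component at face F is tr_F w_{dim F}
   (as an element of the direct sum, components compared via eqF F). *)
Definition Dfam (w : 'I_n.+1 -> kform) : {set 'I_n.+1} -> kform :=
  fun F => w (fdim F).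

(* action of pi on the direct sum: component at F is S_pi^* of the
   component at F' = S_pi(F). *)
Definition act_fam (p : 'S_n.+1) (Phi : {set 'I_n.+1} -> kform) :
  {set 'I_n.+1} -> kform := fun F => pull p (Phi (Sface p F)).

End Forms.

(* Main.v *)
Require Import Defs.
From mathcomp Require Import all_boot all_order all_algebra all_fingroup.
From mathcomp Require Import reals.
From mathcomp Require Import zify.
Local Open Scope ring_scope.

Import GRing.Theory.

Section Aux.
Variables (R : realType) (n k : nat).

Lemma in_face_sub (G H : {set 'I_n.+1}) (x : vec R n) :
  G \subset H -> in_face G x -> in_face H x.
Proof.
move=> sGH [h1 [h2 h3]]; split=> //; split=> // i iH; apply: h3.
by apply: contra iH; apply: (subsetP sGH).
Qed.

Lemma tangent_sub (G H : {set 'I_n.+1}) (v : vec R n) :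
  G \subset H -> tangent G v -> tangent H v.
Proof.
move=> sGH [h2 h3]; split=> // i iH; apply: h3.
by apply: contra iH; apply: (subsetP sGH).
Qed.

Lemma eqF_sub (G H : {set 'I_n.+1}) (w u : kform R n k) :
  G \subset H -> eqF H w u -> eqF G w u.
Proof.
move=> sGH e x vs hx hv; apply: e; first exact: in_face_sub hx.
by move=> j; apply: tangent_sub (hv j).
Qed.

Lemma vanish_down (w : kform R n k) (d : nat) :
  (d <= n.+1)%N ->
  (forall G : {set 'I_n.+1}, #|G| = d -> eqF G w (@form0 R n k)) ->
  forall j (G : {set 'I_n.+1}), (#|G| + j = d)%N -> eqF G w (@form0 R n k).
Proof.
move=> dn hd; elim=> [|j IH] G hG.
  by apply: hd; rewrite -hG addn0.
have: (0 < #|~: G|)%N by rewrite cardsCs setCK card_ord; lia.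
case/card_gt0P=> y; rewrite in_setC => yG.
apply: (@eqF_sub G (y |: G)); first exact: subsetUr.
by apply: IH; rewrite cardsU1 yG /= add1n addSn -addnS.
Qed.

End Aux.

Theorem proposition3p13 (R : realType) (n k : nat)
  (V : kform R n k -> Prop) (W : nat -> kform R n k -> Prop) :
  kf_subspace V -> kf_findim V -> Sn_invariant V ->
  (forall d, (d <= n)%N -> kf_subspace (W d)) ->
  (forall d, (d <= n)%N -> Sn_invariant (W d)) ->
  (forall d, (d <= n)%N -> dsum_decomp V W d) ->
  forall (p : 'S_n.+1) (v : kform R n k) (w w' : 'I_n.+1 -> kform R n k),
    V v -> is_decomp W v w -> is_decomp W (pull p v) w' ->
    forall F : {set 'I_n.+1}, F != set0 ->
      eqF F (Dfam w' F) (act_fam p (Dfam w) F).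
Proof.
move=> HV _ _ HWs HWi HD p v w w' Vv [Ww ev] [Ww' ev'] F _.
have faceP : forall x : vec R n, in_face (fullface n) x -> in_face (fullface n) (Spi p x).
  move=> x [h1 [h2 h3]]; split; first by move=> i; apply: h1.
  split; last by move=> i; rewrite /fullface in_setT.
  rewrite /Spi -h2; symmetry; exact: (reindex_inj (@perm_inj _ p)).
have tanP : forall x : vec R n, tangent (fullface n) x -> tangent (fullface n) (Spi p x).
  move=> x [h2 h3]; split; last by move=> i; rewrite /fullface in_setT.
  rewrite /Spi -[RHS]h2; symmetry; exact: (reindex_inj (@perm_inj _ p)).
pose z := fun d : 'I_n.+1 => form_add (form_scale (-1) (pull p (w d))) (w' d).
have Wz : forall d : 'I_n.+1, W d (z d).
  move=> d; have dn : (d <= n)%N by rewrite -ltnS.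
  have [_ [_ [hc _]]] := HWs d dn.
  by apply: hc => //; apply: (HWi d dn); apply: Ww.
have sumz : forall x vs, in_face (fullface n) x -> (forall j, tangent (fullface n) (vs j)) ->
    \sum_(d < n.+1) z d x vs = 0.
  move=> x vs hx hv.
  have e1 := ev' x vs hx hv.
  have e2 := ev (Spi p x) (fun j => Spi p (vs j)) (faceP _ hx) (fun j => tanP _ (hv j)).
  rewrite /z /form_add /form_scale /pull big_split /= -big_distrr /=.
  rewrite /form_sum /pull in e1 e2.
  by rewrite -e1 e2 mulN1r addNr.
have key : forall m, (m <= n.+1)%N -> forall d : 'I_n.+1, (d < m)%N ->
    eqT (z d) (@form0 R n k).
  elim=> [|m IH] mn d; first by [].
  rewrite ltnS leq_eqVlt => /orP [/eqP dm|dm]; last by apply: IH => //; lia.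
  have dn : (d <= n)%N by rewrite -ltnS.
  have [h1 [h2 _]] := HD d dn.
  apply: h2 => //; split; first exact: (h1 _ (Wz d)).1.
  move=> G hG x vs hx hv.
  have hxT : in_face (fullface n) x by apply: in_face_sub hx; exact: subsetT.
  have hvT : forall j, tangent (fullface n) (vs j).
    by move=> j; apply: tangent_sub (hv j); exact: subsetT.
  have := sumz x vs hxT hvT; rewrite (bigD1 d) //= big1 ?addr0 //.
  move=> j jd; case: (ltnP j d) => jdl.
    by apply: (IH _ j) => //; [lia | lia].
  have jn : (j <= n)%N by rewrite -ltnS.
  have [h1' _] := HD j jn.
  have [_ hv'] := h1' _ (Wz j).
  have jd' : (d < j)%N by rewrite ltn_neqAle eq_sym jdl andbT; apply: contra jd => /eqP/val_inj ->.
  apply: (@vanish_down R n k (z j) j _ hv' (j - d.+1) G) => //; first by lia.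
  by rewrite hG; lia.
move=> x vs hx hv.
have cF : #|Sface p F| = #|F|.
  rewrite /Sface -(card_preimset F (@perm_inj _ p)); apply: eq_card => i.
  by rewrite !inE.
rewrite /Dfam /act_fam /fdim cF.
set d := inord _.
have hxT : in_face (fullface n) x by apply: in_face_sub hx; exact: subsetT.
have hvT : forall j, tangent (fullface n) (vs j).
  by move=> j; apply: tangent_sub (hv j); exact: subsetT.
have := key n.+1 (leqnn _) d (ltn_ord d) x vs hxT hvT.
rewrite /z /form_add /form_scale /form0 mulN1r => /eqP.
by rewrite addrC subr_eq0 => /eqP.
Qed.
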